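(* Let $P\subseteq\mathbb{R}^n$ be an $n$-dimensional rational simplex with vertices $v_0,\dots,v_n$, and let $a_i$ be the lattice distance of $v_i$ from the facet of $P$ not containing $v_i$. Then \[\tau(P)=\mu(P)=\sum_{i=0}^n\frac{1}{a_i}.\]
   Context: Write $P$ irredundantly as $\{x:\langle c_j,x\rangle\ge b_j\}$ with primitive $c_j\in(\mathbb{Z}^n)^*$, each inequality defining a facet $F_j$; the lattice distance of $y$ from $F_j$ is $d_{F_j}(y):=\langle c_j,y\rangle-b_j$, and $d_P(y):=\min_j d_{F_j}(y)$. $P^{(s)}:=\{y:d_P(y)\ge s\}$, $\mu(P):=(\sup\{s>0:P^{(s)}\neq\emptyset\})^{-1}$, and $\tau(P):=(\sup\{s>0:\mathcal{N}(P^{(s)})=\mathcal{N}(P)\})^{-1}$, where $\mathcal{N}$ denotes the inner normal fan. *)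

(* Defs.v *)
From HB Require Import structures.
From mathcomp Require Import all_boot all_order all_algebra.
From mathcomp Require Import all_classical all_reals.
Set Implicit Arguments. Unset Strict Implicit. Unset Printing Implicit Defensive.
Import Order.TTheory GRing.Theory Num.Theory.
Local Open Scope classical_set_scope.
Local Open Scope ring_scope.

Section Defs.
Variables (R : realType) (n : nat).

Definition dotR (w x : 'I_n -> R) : R := \sum_(k < n) w k * x k.

Definition dotZ (c : 'I_n -> int) (x : 'I_n -> R) : R :=
  \sum_(k < n) (c k)%:~R * x k.

Definition primitive (c : 'I_n -> int) : Prop :=
  (\big[gcdn/0%N]_(k < n) `|c k|%N)%N = 1%N.

Definition rational_point (x : 'I_n -> R) : Prop :=
  forall k, exists q : rat, x k = ratr q.

Definition affinely_independent (m : nat) (v : 'I_m -> 'I_n -> R) : Prop :=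
  forall l : 'I_m -> R, \sum_(i < m) l i = 0 ->
    (forall k, \sum_(i < m) l i * v i k = 0) -> forall i, l i = 0.

Definition conv_on (m : nat) (v : 'I_m -> 'I_n -> R) (A : pred 'I_m)
  : set ('I_n -> R) :=
  [set x | exists l : 'I_m -> R, (forall i, 0 <= l i) /\
     (forall i, ~~ A i -> l i = 0) /\ \sum_(i < m) l i = 1 /\
     (forall k, x k = \sum_(i < m) l i * v i k)].

Definition conv (m : nat) (v : 'I_m -> 'I_n -> R) := conv_on v predT.

(* P^(s) = { y : d_P(y) >= s }, where d_P(y) = min_j (<c_j,y> - b_j);
   written out: d_P(y) >= s iff every <c_j,y> - b_j >= s *)
Definition inner_body (m : nat) (c : 'I_m -> 'I_n -> int) (b : 'I_m -> R)
  (s : R) : set ('I_n -> R) :=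
  [set y | forall j, s <= dotZ (c j) y - b j].

Definition face (Q : set ('I_n -> R)) (w : 'I_n -> R) : set ('I_n -> R) :=
  [set x | Q x /\ forall y, Q y -> dotR w x <= dotR w y].

Definition normal_cone (Q F : set ('I_n -> R)) : set ('I_n -> R) :=
  [set u | F `<=` face Q u].

Definition normal_fan (Q : set ('I_n -> R)) : set (set ('I_n -> R)) :=
  [set C | exists w, C = normal_cone Q (face Q w)].

Definition mu_inv (m : nat) (c : 'I_m -> 'I_n -> int) (b : 'I_m -> R) : R :=
  sup [set s : R | 0 < s /\ inner_body c b s !=set0].

Definition mu (m : nat) (c : 'I_m -> 'I_n -> int) (b : 'I_m -> R) : R :=
  (mu_inv c b)^-1.

Definition tau (m : nat) (c : 'I_m -> 'I_n -> int) (b : 'I_m -> R) : R :=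
  (sup [set s : R | 0 < s /\
        normal_fan (inner_body c b s) = normal_fan (inner_body c b 0)])^-1.

End Defs.

(* Main.v *)
Require Import Defs.
From HB Require Import structures.
From mathcomp Require Import all_boot all_order all_algebra.
From mathcomp Require Import all_classical all_reals.
From mathcomp Require Import ring lra.
Set Implicit Arguments. Unset Strict Implicit. Unset Printing Implicit Defensive.
Import Order.TTheory GRing.Theory Num.Theory.
Local Open Scope classical_set_scope.
Local Open Scope ring_scope.

Section H.
Variables (R : realType) (n : nat).

Lemma sum_if m (j : 'I_m) (F : 'I_m -> R) :
  \sum_(i < m) (if i == j then F i else 0) = F j.
Proof. by rewrite -big_mkcond big_pred1_eq. Qed.

Lemma sum_ind_mul m (j : 'I_m) (F : 'I_m -> R) :
  \sum_(i < m) (if i == j then 1 else 0) * F i = F j.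
Proof.
rewrite -(sum_if j F); apply: eq_bigr => i _; case: eqP => _;
  by rewrite ?mul1r ?mul0r.
Qed.

Lemma sum_ind m (j : 'I_m) : \sum_(i < m) (if i == j then 1 else 0 : R) = 1.
Proof. exact: (sum_if j (fun _ => 1)). Qed.

Lemma dotZ_comb m (c : 'I_n -> int) (l : 'I_m -> R) (v : 'I_m -> 'I_n -> R) :
  dotZ c (fun k => \sum_(i < m) l i * v i k) = \sum_(i < m) l i * dotZ c (v i).
Proof.
rewrite /dotZ; under eq_bigr => k _ do rewrite mulr_sumr.
rewrite exchange_big; apply: eq_bigr => i _; rewrite mulr_sumr.
by apply: eq_bigr => k _; rewrite mulrCA.
Qed.

Lemma dotR_comb m (w : 'I_n -> R) (l : 'I_m -> R) (v : 'I_m -> 'I_n -> R) :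
  dotR w (fun k => \sum_(i < m) l i * v i k) = \sum_(i < m) l i * dotR w (v i).
Proof.
rewrite /dotR; under eq_bigr => k _ do rewrite mulr_sumr.
rewrite exchange_big; apply: eq_bigr => i _; rewrite mulr_sumr.
by apply: eq_bigr => k _; rewrite mulrCA.
Qed.

Lemma dotZ_lin (c : 'I_n -> int) (al be : R) (x y : 'I_n -> R) :
  dotZ c (fun k => al * x k + be * y k) = al * dotZ c x + be * dotZ c y.
Proof.
rewrite /dotZ !mulr_sumr -big_split; apply: eq_bigr => k _.
by rewrite mulrDr mulrCA [_ * (be * _)]mulrCA.
Qed.

Lemma dotR_aff (w : 'I_n -> R) (al : R) (x t : 'I_n -> R) :
  dotR w (fun k => al * x k + t k) = al * dotR w x + dotR w t.
Proof.
rewrite /dotR !mulr_sumr -big_split; apply: eq_bigr => k _.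
by rewrite mulrDr mulrCA.
Qed.

Lemma dotR_opp (w x : 'I_n -> R) : dotR (fun k => - w k) x = - dotR w x.
Proof. by rewrite /dotR -sumrN; apply: eq_bigr => k _; rewrite mulNr. Qed.

Lemma dotR_ind (k : 'I_n) (x : 'I_n -> R) :
  dotR (fun k' => if k' == k then 1 else 0) x = x k.
Proof. exact: sum_ind_mul. Qed.

Lemma conv_on_vertex m (v : 'I_m -> 'I_n -> R) (A : pred 'I_m) i :
  A i -> conv_on v A (v i).
Proof.
move=> Ai; exists (fun i' => if i' == i then 1 else 0); split.
  by move=> i'; case: (i' == i).
split; first by move=> i' Ai'; case: eqP => // e; rewrite e Ai in Ai'.
split; first exact: sum_ind.
by move=> k; rewrite sum_ind_mul.
Qed.

Lemma fan_affine (Q : set ('I_n -> R)) (al : R) (t : 'I_n -> R) : 0 < al ->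
  normal_fan [set (fun k => al * x k + t k) | x in Q] = normal_fan Q.
Proof.
move=> alp.
pose phi (x : 'I_n -> R) := fun k => al * x k + t k.
have phiinj : injective phi.
  move=> x y e; apply/funext => k; have := congr1 (fun f => f k) e.
  rewrite /phi /= => /addIr; apply: mulfI; exact: lt0r_neq0.
have face_im u : face [set phi x | x in Q] u = [set phi x | x in face Q u].
  apply/seteqP; split.
  - move=> y [[x Qx <-] H]; exists x => //; split => // z Qz.
    have := H (phi z) (ex_intro2 _ _ z Qz erefl).
    by rewrite /phi !dotR_aff lerD2r ler_pM2l.
  - move=> y [x [Qx H] <-]; split; first by exists x.
    move=> z [z' Qz' <-]; rewrite /phi !dotR_aff lerD2r ler_pM2l //; exact: H.
have cone w : normal_cone [set phi x | x in Q] (face [set phi x | x in Q] w)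
              = normal_cone Q (face Q w).
  rewrite /normal_cone face_im; apply/seteqP; split => u /= H x Fx.
  - have := H (phi x) (ex_intro2 _ _ x Fx erefl).
    by rewrite face_im => -[x' Fx' /phiinj <-].
  - rewrite face_im; case: Fx => x' Fx' <-; exists x' => //; exact: H.
rewrite /normal_fan; apply/seteqP; split => C [w ->]; exists w; by rewrite cone.
Qed.

Lemma exists_min m (F : 'I_m.+1 -> R) : exists i0, forall i, F i0 <= F i.
Proof.
elim: m F => [|m IH] F.
  by exists ord0 => i; rewrite (ord1 i).
have [i1 H1] := IH (fun i => F (lift ord0 i)).
case: (leP (F ord0) (F (lift ord0 i1))) => h.
  exists ord0 => i; case: (unliftP ord0 i) => [j ->|->] //.
  exact: le_trans h (H1 j).
exists (lift ord0 i1) => i; case: (unliftP ord0 i) => [j ->|->].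
  exact: H1.
exact: ltW.
Qed.

End H.
Unset Implicit Arguments.

Theorem proposition3p9 (R : realType) (n : nat)
  (v : 'I_n.+1 -> 'I_n -> R) (c : 'I_n.+1 -> 'I_n -> int) (b : 'I_n.+1 -> R) :
  (forall i, rational_point (v i)) ->
  affinely_independent v ->
  (forall j, primitive (c j)) ->
  conv v = [set x | forall j, b j <= dotZ (c j) x] ->
  (forall j, [set x | conv v x /\ dotZ (c j) x = b j]
             = conv_on v (fun i => i != j)) ->
  tau c b = mu c b /\
  mu c b = \sum_(i < n.+1) (dotZ (c i) (v i) - b i)^-1.
Proof.
move=> _ Hind Hprim Hconv Hface.
case: n v c b Hind Hprim Hconv Hface => [|m] v c b Hind Hprim Hconv Hface.
  by have := Hprim ord0; rewrite /primitive big_ord0.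
pose a i := dotZ (c i) (v i) - b i.
have conv_e i : conv v (v i) by exact: conv_on_vertex.
have fcoord j (l : 'I_m.+2 -> R) : \sum_i l i = 1 ->
    dotZ (c j) (fun k => \sum_i l i * v i k) - b j
    = \sum_i l i * (dotZ (c j) (v i) - b j).
  move=> l1; rewrite dotZ_comb; under [RHS]eq_bigr do rewrite mulrBr.
  by rewrite sumrB -mulr_suml l1 mul1r.
have fvoff i j : i != j -> dotZ (c j) (v i) - b j = 0.
  move=> ij; have : conv_on v (fun i0 => i0 != j) (v i) by exact: conv_on_vertex.
  by rewrite -Hface => -[_ ->]; rewrite subrr.
have fco j l : \sum_i l i = 1 ->
    dotZ (c j) (fun k => \sum_i l i * v i k) - b j = l j * a j.
  move=> l1; rewrite fcoord // (bigD1 j) //= big1 ?addr0 // => i ij.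
  by rewrite fvoff ?mulr0.
have apos j : 0 < a j.
  have := conv_e j; rewrite Hconv /= => /(_ j) h.
  rewrite /a lt_neqAle subr_ge0 h andbT; apply/eqP => e0.
  have : [set x | conv v x /\ dotZ (c j) x = b j] (v j).
    by split; [exact: conv_e | apply/eqP; rewrite -subr_eq0 -e0].
  rewrite Hface => -[l [l0 [lj [l1 lv]]]].
  have ljz : l j = 0 by apply: lj; rewrite /= negbK.
  have h0 : (fun i => l i - (if i == j then 1 else 0)) j = 0.
    apply: (Hind (fun i => l i - (if i == j then 1 else 0))) => /=.
    - by rewrite sumrB l1 sum_ind subrr.
    - move=> k; under eq_bigr do rewrite mulrBl.
      by rewrite sumrB sum_ind_mul -lv subrr.
  by move: h0; rewrite /= ljz eqxx sub0r => /eqP; rewrite oppr_eq0 oner_eq0.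
pose S := \sum_i (a i)^-1.
have Spos : 0 < S.
  rewrite /S (bigD1 ord0) //=; apply: (@lt_le_trans _ _ ((a ord0)^-1)).
    by rewrite invr_gt0.
  by rewrite lerDl; apply: sumr_ge0 => i _; rewrite invr_ge0 ltW.
pose ss := S^-1.
have ssS : ss * S = 1 by rewrite mulVf // lt0r_neq0.
have ss_pos : 0 < ss by rewrite invr_gt0.
have le_ss s : (s <= ss) = (s * S <= 1) by rewrite -ssS ler_pM2r.
have lt_ss s : (s < ss) = (s * S < 1) by rewrite -ssS ltr_pM2r.
have P0E : inner_body c b 0 = conv v.
  rewrite Hconv; apply/seteqP; split=> x /= H j;
    [rewrite -subr_ge0 | rewrite subr_ge0]; exact: H.
have key s y : 0 <= s -> inner_body c b s y ->
   s * S <= 1 /\ (1 <= s * S -> y = (fun k => \sum_i (s * (a i)^-1) * v i k)).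
  move=> s0 Hy.
  have : conv v y by rewrite -P0E /inner_body /= => j; exact: le_trans s0 (Hy j).
  case=> l [l0 [_ [l1 lv]]].
  have yE : y = (fun k => \sum_i l i * v i k) by apply/funext => k; exact: lv.
  have lb j : s * (a j)^-1 <= l j.
    rewrite ler_pdivrMr // -fco // -yE; exact: Hy.
  have sumd : \sum_j (l j - s * (a j)^-1) = 1 - s * S by rewrite sumrB l1 mulr_sumr.
  have dge0 : forall j, true -> 0 <= l j - s * (a j)^-1 by move=> j _; rewrite subr_ge0.
  have hle : s * S <= 1 by rewrite -subr_ge0 -sumd; apply: sumr_ge0.
  split => // hS; have hsum : \sum_j (l j - s * (a j)^-1) = 0.
    by apply/le_anti; rewrite sumd subr_le0 subr_ge0 hS hle.
  rewrite yE; apply/funext => k; apply: eq_bigr => i _; congr (_ * _).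
  by apply/eqP; rewrite -subr_eq0; apply/eqP; exact: (psumr_eq0P dge0 hsum).
have ME : [set s | 0 < s /\ inner_body c b s !=set0] = [set` `]0, ss]].
  apply/seteqP; split => s /=.
  - move=> [s0 [y Hy]]; rewrite in_itv /= s0 le_ss; exact: (key s y (ltW s0) Hy).1.
  - rewrite in_itv /= => /andP [s0 sle]; split => //.
    exists (fun k => \sum_i (ss * (a i)^-1) * v i k) => j.
    have l1 : \sum_i ss * (a i)^-1 = 1 by rewrite -mulr_sumr.
    rewrite (fco j _ l1) -mulrA mulVf ?mulr1 //; exact: lt0r_neq0 (apos j).
have TE : [set s | 0 < s /\ normal_fan (inner_body c b s)
                             = normal_fan (inner_body c b 0)] = [set` `]0, ss[].
  apply/seteqP; split => s /=.
  - move=> [s0 hfan]; rewrite in_itv /= s0 /= ltNge; apply/negP => hs.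
    have hS1 : 1 <= s * S by rewrite -ssS ler_pM2r.
    have setT_in : normal_fan (inner_body c b s) setT.
      exists 0; apply/seteqP; split => // u _ x [Qx _]; split => // y Qy.
      by rewrite ((key s x (ltW s0) Qx).2 hS1) ((key s y (ltW s0) Qy).2 hS1).
    rewrite hfan P0E in setT_in; case: setT_in => w hw.
    have [i0 hi0] := exists_min (fun i => dotR w (v i)).
    have Fx0 : face (conv v) w (v i0).
      split; first exact: conv_e.
      move=> y [l [l0 [_ [l1 lv]]]].
      have -> : y = (fun k => \sum_i l i * v i k) by apply/funext.
      rewrite dotR_comb -[dotR w (v i0)]mul1r -{1}l1 mulr_suml.
      by apply: ler_sum => i _; apply: ler_wpM2l; [exact: l0 | exact: hi0].
    have allface u : face (conv v) w `<=` face (conv v) u.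
      have : normal_cone (conv v) (face (conv v) w) u by rewrite -hw.
      done.
    have same y : conv v y -> v i0 = y.
      move=> Cy; apply/funext => k; apply/le_anti/andP; split.
      - have := (allface (fun k' => if k' == k then 1 else 0) _ Fx0).2 y Cy.
        by rewrite !dotR_ind.
      - have := (allface (fun k' => - (if k' == k then 1 else 0)) _ Fx0).2 y Cy.
        by rewrite !dotR_opp !dotR_ind lerN2.
    have e01 : v ord0 = v ord_max.
      by rewrite -(same _ (conv_e ord0)) (same _ (conv_e ord_max)).
    pose l := fun i : 'I_m.+2 =>
      (if i == ord0 then 1 else 0) - (if i == ord_max then 1 else 0) : R.
    have p1 : \sum_i l i = 0 by rewrite sumrB !sum_ind subrr.
    have p2 : forall k, \sum_i l i * v i k = 0.
      move=> k; rewrite /l; under eq_bigr do rewrite mulrBl.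
      by rewrite sumrB !sum_ind_mul e01 subrr.
    have hne : (ord0 == ord_max :> 'I_m.+2) = false by [].
    have := Hind l p1 p2 ord0; rewrite /l eqxx hne subr0 => /eqP.
    by rewrite oner_eq0.
  - rewrite in_itv /= => /andP [s0 slt]; split => //.
    pose lam := 1 - s * S.
    have lam0 : 0 < lam by rewrite /lam subr_gt0 -lt_ss.
    pose w := fun k => \sum_i (a i)^-1 * v i k.
    pose t := fun k => s * w k.
    have idf x j : dotZ (c j) (fun k => lam * x k + t k) - b j
                   = lam * (dotZ (c j) x - b j) + s.
      rewrite (dotZ_lin (c j) lam s x w).
      have dw : dotZ (c j) w = 1 + S * b j.
        rewrite /w dotZ_comb.
        transitivity (\sum_i (a i)^-1 * (dotZ (c j) (v i) - b j)
                      + \sum_i (a i)^-1 * b j).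
          by rewrite -big_split; apply: eq_bigr => i _ /=; rewrite -mulrDr subrK.
        rewrite -mulr_suml; congr (_ + _).
        rewrite (bigD1 j) //= big1 ?addr0; first exact: mulVf (lt0r_neq0 (apos j)).
        by move=> i ij; rewrite fvoff ?mulr0.
      rewrite dw /lam; ring.
    have IB : inner_body c b s
              = [set (fun k => lam * x k + t k) | x in inner_body c b 0].
      apply/seteqP; split => y.
      - move=> Hy.
        have yE : (fun k => lam * (lam^-1 * (y k - t k)) + t k) = y.
          by apply/funext => k; rewrite mulVKf ?subrK // lt0r_neq0.
        exists (fun k => lam^-1 * (y k - t k)); last exact: yE.
        move=> j; have := Hy j; rewrite -{1}yE idf lerDr pmulr_rge0 //.
      - case=> x Hx <-; rewrite /inner_body /= => j.
        rewrite idf lerDr pmulr_rge0 //; exact: Hx j.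
    by rewrite IB; apply: fan_affine.
rewrite /tau /mu /mu_inv ME TE !sup_itv ?bnd_simp // invrK.
by split.
Qed.
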